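(* Let $I\unlhd K[x_1,\dots,x_n]$ be a homogeneous ideal, let $w\in\mathbb R^n$, and let $J:=\operatorname{in}_{(-1,w)}(\pi^{-1}I)\unlhd R[t,x]$. Then there exists a weight vector $u\in(\mathbb R_{>0})^{n+1}$ such that $J$ is weighted homogeneous with respect to $u$, with $u$ assigning weights to $(t,x_1,\dots,x_n)$.
   Context: Let $K$ be a complete field with a non-trivial discrete valuation $\nu$ and a uniformizing parameter $p$. Let $\mathcal O_K$ be its ring of integers. Let $R\subseteq\mathcal O_K$ be a dense noetherian subring with $p\in R$. The map $\pi:R[[t]][x]\to\mathcal O_K[x]\subseteq K[x]$ sends $t\mapsto p$, and $\pi^{-1}I$ is the preimage of $I$. For $f=\sum c_{\alpha,\beta}t^\beta x^\alpha\in R[[t]][x]$ and $v\in\mathbb R_{<0}\times\mathbb R^n$, $\operatorname{in}_v(f)\in R[t,x]$ is the sum of the terms with $v\cdot(\beta,\alpha)$ maximal. $\operatorname{in}_v(J)$ is the ideal generated by these. An ideal is weighted homogeneous with respect to $u$ if it is generated by polynomials that are homogeneous with respect to the $u$-weighted degree. *)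

(* Defs.v *)
From HB Require Import structures.
From mathcomp Require Import all_boot all_order all_algebra.
From mathcomp Require Import mpoly.
From mathcomp Require Import reals.

Set Implicit Arguments.
Unset Strict Implicit.
Unset Printing Implicit Defensive.

Import Order.TTheory GRing.Theory Num.Theory.
Local Open Scope ring_scope.

Definition ideal_gen (A : comNzRingType) (G : A -> Prop) : A -> Prop :=
  fun a => exists s : seq (A * A),
    (forall x, x \in s -> G x.2) /\ a = \sum_(x <- s) x.1 * x.2.

Definition is_ideal (A : comNzRingType) (I : A -> Prop) : Prop :=
  [/\ I 0, (forall a b, I a -> I b -> I (a + b)) &
      (forall r a, I a -> I (r * a))].

Definition noetherian (A : comNzRingType) : Prop :=
  forall I : A -> Prop, is_ideal I ->
    exists s : seq A, forall a, I a <-> ideal_gen (fun b => b \in s) a.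

(* Discrete valuations.  nu x is meaningful for x != 0 (nu 0 = +oo).   *)

Definition discrete_valuation (K : fieldType) (nu : K -> int) : Prop :=
  (forall x y, x != 0 -> y != 0 -> nu (x * y) = nu x + nu y) /\
  (forall x y, x != 0 -> y != 0 -> x + y != 0 ->
      Order.min (nu x) (nu y) <= nu (x + y)).

Definition nontrivial_valuation (K : fieldType) (nu : K -> int) : Prop :=
  exists x : K, x != 0 /\ nu x != 0.

(* "nu x >= N", with the convention nu 0 = +oo *)
Definition val_ge (K : fieldType) (nu : K -> int) (x : K) (N : int) : Prop :=
  x = 0 \/ N <= nu x.

Definition in_OK (K : fieldType) (nu : K -> int) (x : K) : Prop :=
  val_ge nu x 0.

Definition uniformizer (K : fieldType) (nu : K -> int) (p : K) : Prop :=
  [/\ p != 0, 0 < nu p & forall x, x != 0 -> 0 < nu x -> nu p <= nu x].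

Definition converges (K : fieldType) (nu : K -> int) (a : nat -> K) (l : K) :=
  forall N : int, exists M : nat, forall k, (M <= k)%N -> val_ge nu (a k - l) N.

Definition cauchy (K : fieldType) (nu : K -> int) (a : nat -> K) :=
  forall N : int, exists M : nat, forall k l, (M <= k)%N -> (M <= l)%N ->
    val_ge nu (a k - a l) N.

Definition complete (K : fieldType) (nu : K -> int) : Prop :=
  forall a : nat -> K, cauchy nu a -> exists l, converges nu a l.

Definition dense_in_OK (K : fieldType) (nu : K -> int) (R : comNzRingType)
  (iota : R -> K) : Prop :=
  forall x, in_OK nu x -> forall N : int, exists r : R, val_ge nu (x - iota r) N.

(* R[[t]][x] : f = sum_{a,b} f b a t^b x^a, with finitely many a.      *)

Definition psx_poly (R : comNzRingType) (n : nat) (f : nat -> 'X_{1..n} -> R) :=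
  exists s : seq 'X_{1..n}, forall b a, f b a != 0 -> a \in s.

(* pi f = g  (t |-> p): coefficientwise  sum_b f b a p^b = g_a in K      *)
Definition pi_rel (K : fieldType) (nu : K -> int) (R : comNzRingType)
  (iota : R -> K) (p : K) (n : nat) (f : nat -> 'X_{1..n} -> R)
  (g : {mpoly K[n]}) : Prop :=
  forall a : 'X_{1..n},
    converges nu (fun N => \sum_(b < N) iota (f b a) * p ^+ b) g@_a.

Definition pi_preim (K : fieldType) (nu : K -> int) (R : comNzRingType)
  (iota : R -> K) (p : K) (n : nat) (I : {mpoly K[n]} -> Prop)
  (f : nat -> 'X_{1..n} -> R) : Prop :=
  psx_poly f /\ exists g, I g /\ pi_rel nu iota p f g.

(* the monomial t^b x^a of R[t,x] = R[x_0,...,x_n] with x_0 = t *)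
Definition tmon (n : nat) (b : nat) (a : 'X_{1..n}) : 'X_{1..n.+1} :=
  [multinom (if unlift ord0 i is Some j then a j else b) | i < n.+1].

Section Weights.
Variable rR : realType.

Definition vweight (n : nat) (v0 : rR) (w : 'I_n -> rR) (b : nat) (a : 'X_{1..n}) : rR :=
  v0 * b%:R + \sum_(i < n) w i * (a i)%:R.

Definition initial_form (R : comNzRingType) (n : nat) (v0 : rR) (w : 'I_n -> rR)
  (f : nat -> 'X_{1..n} -> R) (g : {mpoly R[n.+1]}) : Prop :=
  ((forall b a, f b a = 0) /\ g = 0) \/
  exists M : rR,
    [/\ exists b a, f b a != 0 /\ vweight v0 w b a = M,
        forall b a, f b a != 0 -> vweight v0 w b a <= M &
        forall b a, g@_(tmon b a) = if vweight v0 w b a == M then f b a else 0].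

Definition initial_ideal (R : comNzRingType) (n : nat) (v0 : rR) (w : 'I_n -> rR)
  (J : (nat -> 'X_{1..n} -> R) -> Prop) : {mpoly R[n.+1]} -> Prop :=
  ideal_gen (fun g => exists f, J f /\ initial_form v0 w f g).

Definition weighted_homog (R : comNzRingType) (m : nat) (u : 'I_m -> rR)
  (g : {mpoly R[m]}) : Prop :=
  exists d : rR, forall mo, mo \in msupp g -> \sum_(i < m) u i * (mo i)%:R = d.

Definition weighted_homog_ideal (R : comNzRingType) (m : nat) (u : 'I_m -> rR)
  (J : {mpoly R[m]} -> Prop) : Prop :=
  exists G : {mpoly R[m]} -> Prop,
    (forall g, G g -> weighted_homog u g) /\ (forall g, J g <-> ideal_gen G g).

End Weights.

Definition homog_ideal (K : fieldType) (n : nat) (I : {mpoly K[n]} -> Prop) : Prop :=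
  exists G : {mpoly K[n]} -> Prop,
    (forall g, G g -> exists d, g \is d.-homog) /\ (forall g, I g <-> ideal_gen G g).

(* Main.v *)
Require Import Defs.
From HB Require Import structures.
From mathcomp Require Import all_boot all_order all_algebra.
From mathcomp Require Import mpoly.
From mathcomp Require Import reals.
Import Order.TTheory GRing.Theory Num.Theory.
Local Open Scope ring_scope.

Set Implicit Arguments.
Unset Strict Implicit.

Section IG.
Variable A : comNzRingType.
Implicit Types G H : A -> Prop.

Lemma ig0 G : ideal_gen G 0.
Proof. by exists [::]; split => //; rewrite big_nil. Qed.

Lemma igD G a b : ideal_gen G a -> ideal_gen G b -> ideal_gen G (a + b).
Proof.
move=> [s1 [h1 ->]] [s2 [h2 ->]]; exists (s1 ++ s2); split; last by rewrite big_cat.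
by move=> x; rewrite mem_cat => /orP [/h1|/h2].
Qed.

Lemma igM G r a : ideal_gen G a -> ideal_gen G (r * a).
Proof.
move=> [s [h ->]]; exists (map (fun x => (r * x.1, x.2)) s); split.
  by move=> x /mapP [y ys ->]; exact: (h y ys).
by rewrite big_map mulr_sumr; apply: eq_bigr => x _; rewrite mulrA.
Qed.

Lemma igG G g : G g -> ideal_gen G g.
Proof. by move=> Gg; exists [:: (1, g)]; split; [move=> x; rewrite inE => /eqP -> | rewrite big_seq1 mul1r]. Qed.

Lemma igsum G (I : Type) (r : seq I) (P : pred I) (F : I -> A) :
  (forall i, P i -> ideal_gen G (F i)) -> ideal_gen G (\sum_(i <- r | P i) F i).
Proof. by move=> h; apply: big_ind => //; [exact: ig0 | exact: igD]. Qed.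

Lemma igmono G H a : (forall g, G g -> ideal_gen H g) -> ideal_gen G a -> ideal_gen H a.
Proof.
move=> hGH [s [h ->]]; rewrite big_seq; apply: igsum => x xs.
by apply: igM; apply: hGH; apply: h.
Qed.
End IG.

Lemma pihomog_coef n (R : comNzRingType) (mf : measure n) d (p : {mpoly R[n]}) m :
  (pihomog mf d p)@_m = if mf m == d then p@_m else 0.
Proof.
rewrite pihomogE raddf_sum /=.
under eq_bigr do rewrite mcoeffZ mcoeffX.
case: (boolP (m \in msupp p)) => hm.
  rewrite big_mkcond (bigD1_seq m) ?msupp_uniq //= eqxx mulr1 big1 ?addr0 //.
  by move=> m' /negbTE ne; case: ifP => // _; rewrite ne mulr0.
rewrite big1; first by move: hm; rewrite mcoeff_msupp negbK => /eqP ->; case: ifP.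
move=> m' _; case: eqP => [e|]; last by rewrite mulr0.
by move: hm; rewrite -e mcoeff_msupp negbK => /eqP ->; rewrite mul0r.
Qed.

Lemma homog_ig n (R : comNzRingType) (G : {mpoly R[n]} -> Prop) a d :
  (forall g, G g -> exists e, g \is e.-homog) -> ideal_gen G a ->
  ideal_gen G (pihomog mdeg d a).
Proof.
move=> hG [s [hs ->]]; rewrite raddf_sum /=; rewrite big_seq; apply: igsum => x xs.
have [e he] := hG _ (hs _ xs).
have -> : pihomog mdeg d (x.1 * x.2) =
   (\sum_(j < msize x.1) (if (j + e == d)%N then pihomog mdeg j x.1 else 0)) * x.2.
  rewrite {1}(pihomog_partitionE (leqnn (msize x.1))) mulr_suml raddf_sum mulr_suml /=.
  apply: eq_bigr => j _.
  have hj : pihomog mdeg j x.1 * x.2 \is (j + e)%N.-homog by apply: dhomogM => //; exact: pihomogP.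
  case: eqP => [<-|ne]; first by rewrite pihomog_dE.
  by rewrite mul0r (pihomog_ne0 _ hj) //; apply/eqP.
by apply: igM; apply: igG; apply: hs.
Qed.

Definition xdeg n (m : 'X_{1..n.+1}) : nat := (\sum_(i < n) m (lift ord0 i))%N.
Lemma xdeg0 n : @xdeg n 0%MM = 0%N.
Proof. by rewrite /xdeg big1 // => i _; rewrite mnm0E. Qed.
Lemma xdegD n : {morph @xdeg n : m1 m2 / (m1 + m2)%MM >-> (m1 + m2)%N}.
Proof. by move=> m1 m2; rewrite /xdeg -big_split /=; apply: eq_bigr => i _; rewrite mnmDE. Qed.
HB.instance Definition _ n := isMeasure.Build n.+1 (@xdeg n) (@xdeg0 n) (@xdegD n).

Definition mtail n (m : 'X_{1..n.+1}) : 'X_{1..n} := [multinom m (lift ord0 i) | i < n].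

Lemma tmon_ex n (m : 'X_{1..n.+1}) : exists b a, m = tmon b a.
Proof.
exists (m ord0), (mtail m); apply/mnmP => i; rewrite mnmE.
by case: unliftP => [j ->|->] //; rewrite mnmE.
Qed.

Lemma tmon_lift n b (a : 'X_{1..n}) j : tmon b a (lift ord0 j) = a j.
Proof. by rewrite mnmE liftK. Qed.
Lemma tmon_0 n b (a : 'X_{1..n}) : tmon b a ord0 = b.
Proof. by rewrite mnmE unlift_none. Qed.

Lemma xdeg_tmon n b (a : 'X_{1..n}) : xdeg (tmon b a) = mdeg a.
Proof. by rewrite /xdeg mdegE; apply: eq_bigr => j _; rewrite tmon_lift. Qed.

Lemma pihomog_xcoef n (R : comNzRingType) d (p : {mpoly R[n.+1]}) m :
  (pihomog (@xdeg n) d p)@_m = if xdeg m == d then p@_m else 0.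
Proof. exact: pihomog_coef. Qed.

Lemma wsum (rR : realType) n (lam : rR) (w : 'I_n -> rR) b (a : 'X_{1..n}) :
  \sum_(i < n.+1) (fun i => if unlift ord0 i is Some j then lam - w j else 1) i * ((tmon b a) i)%:R
  = lam * (mdeg a)%:R - vweight (-1) w b a.
Proof.
rewrite big_ord_recl /= unlift_none tmon_0 mul1r.
under eq_bigr do rewrite liftK tmon_lift mulrBl.
rewrite sumrB -mulr_sumr mdegE natr_sum /vweight.
by rewrite mulN1r opprD opprK addrCA.
Qed.

Theorem lemma5p2
  (rR : realType)
  (K : fieldType) (nu : K -> int)
  (hval : discrete_valuation nu) (hnt : nontrivial_valuation nu)
  (hcomplete : complete nu)
  (R : comNzRingType) (iota : {rmorphism R -> K})
  (hinj : injective iota) (hOK : forall r, in_OK nu (iota r))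
  (hdense : dense_in_OK nu iota) (hnoeth : noetherian R)
  (pR : R) (hunif : uniformizer nu (iota pR))
  (n : nat) (I : {mpoly K[n]} -> Prop) (hI : homog_ideal I)
  (w : 'I_n -> rR) :
  exists u : 'I_n.+1 -> rR,
    (forall i, 0 < u i) /\
    weighted_homog_ideal u
      (initial_ideal (-1) w (pi_preim nu iota (iota pR) I)).
Proof.
pose lam : rR := 1 + \sum_(i < n) `|w i|.
pose u := fun i : 'I_n.+1 => if unlift ord0 i is Some j then lam - w j else 1.
exists u; split.
  move=> i; rewrite /u; case: unliftP => [j _|_]; last exact: ltr01.
  rewrite subr_gt0 /lam; apply: (le_lt_trans (ler_norm _)).
  rewrite ltr_pwDl ?ltr01 // (bigD1 j) //= lerDl sumr_ge0 //.
pose Gens := fun g => exists f, pi_preim nu iota (iota pR) I f /\ initial_form (-1) w f g.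
pose G' := fun g => Gens g /\ weighted_homog u g.
exists G'; split; first by move=> g [].
move=> g; split; last by apply: igmono => h [Gh _]; apply: igG.
apply: igmono => {}g [f [[psx [g0 [Ig0 pirel]]] inf]].
case: inf => [[f0 ->]|[M [hex hle hcoef]]]; first exact: ig0.
rewrite (@pihomog_partitionE _ _ (@xdeg n) _ g (leqnn _)).
apply: igsum => d' _; move: (nat_of_ord d') => d.
set gd := pihomog _ d g.
have [->|gd0] := eqVneq gd 0; first exact: ig0.
apply: igG.
pose fd := fun b (a : 'X_{1..n}) => if mdeg a == d then f b a else 0.
have hcd : forall b a, gd@_(tmon b a) = if vweight (-1) w b a == M then fd b a else 0.
  move=> b a; rewrite pihomog_xcoef xdeg_tmon hcoef /fd.
  by case: (mdeg a == d); case: (_ == M).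
split.
  exists fd; split.
    split.
      by case: psx => s hs; exists s => b a; rewrite /fd; case: ifP => _; [exact: hs | by rewrite eqxx].
    exists (pihomog mdeg d g0); split.
      case: hI => G0 [hG0 hiff]; apply/hiff; apply: homog_ig => //; exact/hiff.
    move=> a N; case E: (mdeg a == d).
      have [M' HM] := pirel a N; exists M' => k hk.
      rewrite pihomog_coef E.
      have -> : \sum_(b < k) iota (fd b a) * iota pR ^+ b = \sum_(b < k) iota (f b a) * iota pR ^+ b.
        by apply: eq_bigr => b _; rewrite /fd E.
      exact: HM.
    exists 0%N => k _; left; rewrite pihomog_coef E subr0 big1 // => b _.
    by rewrite /fd E rmorph0 mul0r.
  right; exists M; split.
  - have := mlead_supp gd0; rewrite mcoeff_msupp.
    have [b [a ->]] := tmon_ex (mlead gd); rewrite hcd.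
    by case: ifP => [/eqP EM hne|_]; [exists b, a | rewrite eqxx].
  - by move=> b a; rewrite /fd; case: ifP => _; [exact: hle | rewrite eqxx].
  - exact: hcd.
exists (lam * d%:R - M) => mo; rewrite mcoeff_msupp.
have [b [a ->]] := tmon_ex mo; rewrite hcd /fd.
case: ifP => [/eqP EM|_]; last by rewrite eqxx.
case: ifP => [/eqP Ed _|_]; last by rewrite eqxx.
by rewrite /u wsum Ed EM.
Qed.
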